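(* Let $\mathsf{X}=\mathsf{Y}=\{0,1\}$, $\mu=\psi=\mathrm{Bernoulli}(1/2)$ and $\rho(x,y)=1_{\{x\ne y\}}$ (Hamming distortion). Then for every $D\in(0,1/2)$, $$I_0(\mu\|\psi,D)<C_0(\mu\|\psi,D).$$
   Context: $I_0(\mu\|\psi,D):=\min\{\max(I(X;U),I(Y;U)):\ P_X=\mu,\ P_Y=\psi,\ \mathbb{E}[\rho(X,Y)]\le D,\ X-U-Y\text{ Markov},\ |\mathsf{U}|\le|\mathsf{X}|+|\mathsf{Y}|+1\}$ (the minimum coding rate with no common randomness for the output-constrained problem). Wyner's common information of a joint law $P_{X,Y}$ is $C(X;Y):=\inf\{I(X,Y;U): X-U-Y\text{ Markov}, U \text{ finite-valued}\}$, and $C_0(\mu\|\psi,D):=\min\{C(X;Y): P_X=\mu,\ P_Y=\psi,\ \mathbb{E}[\rho(X,Y)]\le D\}$. *)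

(* Defs.v *)
From Stdlib Require Import Reals.
Open Scope R_scope.

Fixpoint sumN (n : nat) (f : nat -> R) : R :=
  match n with O => 0 | S k => sumN k f + f k end.
Definition sumB (f : bool -> R) : R := f false + f true.

(* Convention 0 log(0/b) = 0; natural logarithm (base irrelevant here). *)
Definition plog (a b : R) : R :=
  if Req_EM_T a 0 then 0 else a * ln (a / b).

(* A joint law of (X,U,Y) on {0,1} x {0,...,n-1} x {0,1}, written p x u y. *)
Definition joint := bool -> nat -> bool -> R.

Definition valid (n : nat) (p : joint) : Prop :=
  (forall x u y, 0 <= p x u y) /\
  (forall x u y, (n <= u)%nat -> p x u y = 0) /\
  sumB (fun x => sumN n (fun u => sumB (fun y => p x u y))) = 1.

Definition pX  (n : nat) (p : joint) (x : bool) : R := sumN n (fun u => sumB (p x u)).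
Definition pY  (n : nat) (p : joint) (y : bool) : R := sumN n (fun u => sumB (fun x => p x u y)).
Definition pU  (p : joint) (u : nat) : R := sumB (fun x => sumB (p x u)).
Definition pXU (p : joint) (x : bool) (u : nat) : R := sumB (p x u).
Definition pUY (p : joint) (u : nat) (y : bool) : R := sumB (fun x => p x u y).
Definition pXY (n : nat) (p : joint) (x y : bool) : R := sumN n (fun u => p x u y).

(* X - U - Y Markov chain: P(x,u,y) P(u) = P(x,u) P(u,y). *)
Definition markov (p : joint) : Prop :=
  forall x u y, p x u y * pU p u = pXU p x u * pUY p u y.

Definition MI_XU (n : nat) (p : joint) : R :=
  sumB (fun x => sumN n (fun u => plog (pXU p x u) (pX n p x * pU p u))).
Definition MI_YU (n : nat) (p : joint) : R :=
  sumB (fun y => sumN n (fun u => plog (pUY p u y) (pY n p y * pU p u))).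
Definition MI_XY_U (n : nat) (p : joint) : R :=
  sumB (fun x => sumB (fun y => sumN n (fun u =>
    plog (p x u y) (pXY n p x y * pU p u)))).

(* Hamming distortion E[rho(X,Y)] = P(X <> Y). *)
Definition distortion (n : nat) (p : joint) : R := pXY n p false true + pXY n p true false.

Definition is_inf (S : R -> Prop) (m : R) : Prop :=
  (forall r, S r -> m <= r) /\ (forall m', (forall r, S r -> m' <= r) -> m' <= m).

(* mu = psi = Bernoulli(1/2); |U| <= |X|+|Y|+1 = 5, i.e. U takes values in {0,...,4}. *)
Definition I0_set (D : R) (r : R) : Prop :=
  exists p : joint, valid 5 p /\ markov p /\
    (forall x, pX 5 p x = 1/2) /\ (forall y, pY 5 p y = 1/2) /\
    distortion 5 p <= D /\ r = Rmax (MI_XU 5 p) (MI_YU 5 p).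

Definition coupling (q : bool -> bool -> R) : Prop :=
  (forall x y, 0 <= q x y) /\
  (forall x, sumB (q x) = 1/2) /\ (forall y, sumB (fun x => q x y) = 1/2).

(* Wyner's common information C(X;Y) for P_{XY} = q: inf over finite-valued U. *)
Definition Wyner_set (q : bool -> bool -> R) (r : R) : Prop :=
  exists (n : nat) (p : joint), valid n p /\ markov p /\
    (forall x y, pXY n p x y = q x y) /\ r = MI_XY_U n p.

Definition C0_set (D : R) (c : R) : Prop :=
  exists q, coupling q /\ q false true + q true false <= D /\ is_inf (Wyner_set q) c.

(* Main.v *)
Require Import Defs.
From Stdlib Require Import Reals Lra Lia.
From Coquelicot Require Import Coquelicot.
Open Scope R_scope.

Definition pl (x:R) := plog x 1.
Definition hb (x:R) := - pl x - pl (1-x).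
Definition hr (x:R) := - (x * ln x) - (1-x) * ln (1-x).

Lemma pl_pos x : 0 < x -> pl x = x * ln x.
Proof. intros H. unfold pl, plog. destruct (Req_EM_T x 0); [lra|].
unfold Rdiv. rewrite Rinv_1, Rmult_1_r. reflexivity. Qed.

Lemma pl_0 : pl 0 = 0.
Proof. unfold pl, plog. destruct (Req_EM_T 0 0); [reflexivity|lra]. Qed.

Lemma hb_int x : 0<x<1 -> hb x = hr x.
Proof. intros H. unfold hb, hr. rewrite !pl_pos by lra. ring. Qed.

Lemma hb_0 : hb 0 = 0.
Proof. unfold hb. rewrite pl_0. replace (1-0) with 1 by ring. rewrite pl_pos by lra.
rewrite ln_1. ring. Qed.

Lemma hb_sym x : hb (1-x) = hb x.
Proof. unfold hb. replace (1-(1-x)) with x by ring. ring. Qed.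

Lemma ln_lt_xm1 x : 0<x -> x<>1 -> ln x < x - 1.
Proof. intros H1 H2. assert (ln x <> 0).
{ intro E. apply H2. rewrite <- (exp_ln x H1), E. apply exp_0. }
pose proof (exp_ineq1 _ H). rewrite exp_ln in H0 by lra. lra. Qed.

Lemma ln_le_xm1 x : 0<x -> ln x <= x - 1.
Proof. intros H. destruct (Req_EM_T x 1). subst. rewrite ln_1. lra.
left. apply ln_lt_xm1; auto. Qed.

Lemma ln_nonpos x : 0 < x <= 1 -> ln x <= 0.
Proof. intros H. rewrite <- ln_1. apply ln_le; lra. Qed.

Lemma hr_deriv x : 0<x<1 -> derivable_pt_lim hr x (ln (1-x) - ln x).
Proof. intros H. apply is_derive_Reals. unfold hr. auto_derive. lra.
replace (1 + -x) with (1-x) by ring. field. lra. Qed.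

Lemma hb_ge x : 0 < x < 1 -> - (x * ln x) <= hb x.
Proof. intros H. rewrite hb_int by lra. unfold hr.
assert (ln (1-x) <= 0) by (apply ln_nonpos; lra). nra. Qed.

Definition ell t := ln (1+t) - ln (1-t).
Definition ell' t := / (1+t) + / (1-t).

Lemma ell_deriv t : -1<t<1 -> derivable_pt_lim ell t (ell' t).
Proof. intros H. apply is_derive_Reals. unfold ell, ell'. auto_derive. lra.
replace (1 + -t) with (1-t) by ring. field. lra. Qed.

Lemma ell_0 : ell 0 = 0.
Proof. unfold ell. replace (1+0) with 1 by ring. replace (1-0) with 1 by ring. ring. Qed.

Lemma ell'_mono x y : 0 <= x -> x < y -> y < 1 -> ell' x <= ell' y.
Proof. intros. unfold ell'.
assert (E: forall z, -1<z<1 -> / (1+z) + /(1-z) = 2 / (1 - z*z)).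
{ intros z Hz. field. split; nra. }
rewrite !E by lra. unfold Rdiv. apply Rmult_le_compat_l. lra.
apply Rinv_le_contravar; nra. Qed.

Lemma ell_chord s t : 0<s -> s<t -> t<1 -> t * ell s <= s * ell t.
Proof. intros H1 H2 H3.
destruct (MVT_cor2 ell ell' 0 s H1) as [c1 [E1 C1]].
{ intros c Hc. apply ell_deriv. lra. }
destruct (MVT_cor2 ell ell' s t H2) as [c2 [E2 C2]].
{ intros c Hc. apply ell_deriv. lra. }
rewrite ell_0 in E1.
assert (ell' c1 <= ell' c2) by (apply ell'_mono; lra).
assert (0 < s*(t-s)) by nra.
assert (ell s = ell' c1 * s) by lra.
assert (ell t = ell s + ell' c2 * (t - s)) by lra.
rewrite H4. rewrite H5. rewrite H4. nra. Qed.

Lemma ell_conv x : 0<x<1 -> ell (1-2*x) = ln (1-x) - ln x.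
Proof. intros H. unfold ell.
replace (1 + (1-2*x)) with (2*(1-x)) by ring.
replace (1 - (1-2*x)) with (2*x) by ring.
rewrite !ln_mult by lra. ring. Qed.

Section T.
Variable a : R.
Hypothesis Ha : 0 < a < 1/2.

Definition Ra := ln (1-a) - ln a.
Definition mu := Ra / (4*(1-2*a)).

Lemma Ra_pos : 0 < Ra.
Proof. unfold Ra. assert (ln a < ln (1-a)) by (apply ln_increasing; lra). lra. Qed.

Lemma mu_pos : 0 < mu.
Proof. unfold mu. pose proof Ra_pos. apply Rdiv_lt_0_compat; lra. Qed.

Definition Fr x := hr a - mu*((1-2*x)^2 - (1-2*a)^2) - hr x.
Definition Fr' x := 4*mu*(1-2*x) - (ln (1-x) - ln x).

Lemma Fr_deriv x : 0<x<1 -> derivable_pt_lim Fr x (Fr' x).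
Proof. intros H. apply is_derive_Reals. unfold Fr, Fr', hr. auto_derive. lra.
replace (1 + -x) with (1-x) by ring. field. lra. Qed.

Lemma four_mu : 4*mu = ell (1-2*a) / (1-2*a).
Proof. rewrite ell_conv by lra. unfold mu, Ra. field. lra. Qed.

Lemma Fr'_neg x : 0 < x <= a -> Fr' x <= 0.
Proof. intros H. unfold Fr'. rewrite <- ell_conv by lra. rewrite four_mu.
destruct (Req_EM_T x a). subst. unfold Rdiv. field_simplify; lra.
pose proof (ell_chord (1-2*a) (1-2*x) ltac:(lra) ltac:(lra) ltac:(lra)).
assert (ell (1-2*a)/(1-2*a) * (1-2*x) <= ell (1-2*x)); [|lra].
apply (Rmult_le_reg_r (1-2*a)). lra. unfold Rdiv.
replace (ell (1 - 2 * a) * / (1 - 2 * a) * (1 - 2 * x) * (1 - 2 * a)) with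
 ((1 - 2 * x) * ell (1-2*a)) by (field; lra). lra. Qed.

Lemma Fr'_pos x : a <= x < 1/2 -> 0 <= Fr' x.
Proof. intros H. unfold Fr'. rewrite <- ell_conv by lra. rewrite four_mu.
destruct (Req_EM_T x a). subst. unfold Rdiv. field_simplify; lra.
pose proof (ell_chord (1-2*x) (1-2*a) ltac:(lra) ltac:(lra) ltac:(lra)).
assert (ell (1-2*x) <= ell (1-2*a)/(1-2*a) * (1-2*x)); [|lra].
apply (Rmult_le_reg_r (1-2*a)). lra. unfold Rdiv.
replace (ell (1 - 2 * a) * / (1 - 2 * a) * (1 - 2 * x) * (1 - 2 * a)) with
 ((1 - 2 * x) * ell (1-2*a)) by (field; lra). lra. Qed.

Lemma Fr_a : Fr a = 0.
Proof. unfold Fr. ring. Qed.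

Lemma Fr_ge_half x : 0 < x <= 1/2 -> 0 <= Fr x.
Proof. intros H.
destruct (Rtotal_order x a) as [Hl|[He|Hg]].
- destruct (MVT_cor2 Fr Fr' x a Hl) as [c [E C]].
  { intros c Hc. apply Fr_deriv. lra. }
  rewrite Fr_a in E. pose proof (Fr'_neg c ltac:(lra)). nra.
- subst. rewrite Fr_a. lra.
- destruct (MVT_cor2 Fr Fr' a x Hg) as [c [E C]].
  { intros c Hc. apply Fr_deriv. lra. }
  rewrite Fr_a in E. pose proof (Fr'_pos c ltac:(lra)). nra.
Qed.

Lemma T_half x : 0 <= x <= 1/2 -> hb x <= hb a - mu*((1-2*x)^2 - (1-2*a)^2).
Proof. intros H. destruct (Req_EM_T x 0).
- subst. rewrite hb_0.
  set (e := Rmin (a/2) (exp (-(4*mu)))).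
  assert (He : 0 < e <= a/2).
  { unfold e. split. apply Rmin_pos. lra. apply exp_pos. apply Rmin_l. }
  assert (Hle : ln e <= -(4*mu)).
  { rewrite <- (ln_exp (-(4*mu))). apply ln_le. lra. apply Rmin_r. }
  pose proof (Fr_ge_half e ltac:(lra)). unfold Fr in H0.
  rewrite <- !hb_int in H0 by lra.
  pose proof (hb_ge e ltac:(lra)). pose proof mu_pos.
  assert (- (e * ln e) >= 4*mu*e) by nra. nra.
- pose proof (Fr_ge_half x ltac:(lra)). unfold Fr in H0.
  rewrite <- !hb_int in H0 by lra. lra.
Qed.

Lemma T_all x : 0 <= x <= 1 -> hb x <= hb a - mu*((1-2*x)^2 - (1-2*a)^2).
Proof. intros H. destruct (Rle_lt_dec x (1/2)). apply T_half; lra.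
rewrite <- hb_sym. replace ((1-2*x)^2) with ((1-2*(1-x))^2) by ring.
apply T_half; lra. Qed.

Lemma K2 x y : 0 <= x <= 1 -> 0 <= y <= 1 ->
  hb x + hb y <= 2 * hb a - 2*mu*((1-2*x)*(1-2*y) - (1-2*a)^2).
Proof. intros Hx Hy. pose proof (T_all x Hx). pose proof (T_all y Hy).
pose proof mu_pos. assert (0 <= mu * ((x-y)*(x-y))) by (apply Rmult_le_pos; [lra | apply Rle_0_sqr]).
assert (mu*((1-2*x)^2 - (1-2*a)^2) + mu*((1-2*y)^2 - (1-2*a)^2) >=
  2*mu*((1-2*x)*(1-2*y) - (1-2*a)^2)).
{ apply Rminus_ge. replace (mu*((1-2*x)^2 - (1-2*a)^2) + mu*((1-2*y)^2 - (1-2*a)^2) -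
  2*mu*((1-2*x)*(1-2*y) - (1-2*a)^2)) with (4*(mu*((x-y)*(x-y)))) by ring. lra. }
lra. Qed.

End T.

Lemma hr'_pos x : 0 < x < 1/2 -> 0 < ln (1-x) - ln x.
Proof. intros H. assert (ln x < ln (1-x)) by (apply ln_increasing; lra). lra. Qed.

Lemma hb_incr x y : 0 < x -> x < y -> y <= 1/2 -> hb x < hb y.
Proof. intros H1 H2 H3. rewrite !hb_int by lra.
destruct (MVT_cor2 hr (fun x => ln (1-x) - ln x) x y H2) as [c [E C]].
{ intros c Hc. apply hr_deriv. lra. }
pose proof (hr'_pos c ltac:(lra)). nra. Qed.

Section G.
Variable a : R.
Hypothesis Ha : 0 < a < 1/2.
Let D := 2*a*(1-a).
Let m := mu a.

Definition kf e := hb e + 2*m*(1-2*e-(1-2*a)^2).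
Definition kr e := hr e + 2*m*(1-2*e-(1-2*a)^2).
Definition kr' e := ln (1-e) - ln e - 4*m.

Lemma kr_deriv e : 0<e<1 -> derivable_pt_lim kr e (kr' e).
Proof. intros H. apply is_derive_Reals. unfold kr, kr', hr. auto_derive. lra.
replace (1 + -e) with (1-e) by ring. field. lra. Qed.

Lemma kr'_mono x y : 0 < x -> x <= y -> y < 1 -> kr' y <= kr' x.
Proof. intros. unfold kr'. assert (ln x <= ln y) by (apply ln_le; lra).
assert (ln (1-y) <= ln (1-x)) by (apply ln_le; lra). lra. Qed.

Lemma D_range : a < D < 1/2.
Proof. unfold D. split; nra. Qed.

Lemma k_bound e : 0 <= e <= D -> Rmin (kf 0) (kf D) <= kf e.
Proof. intros He. pose proof D_range. pose proof (mu_pos a Ha) as Hm. fold m in Hm.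
set (e0 := Rmin (D/2) (exp (-(4*m)))).
assert (He0 : 0 < e0 <= D/2).
{ unfold e0. split. apply Rmin_pos. lra. apply exp_pos. apply Rmin_l. }
assert (Hk0 : forall x, 0 <= x <= e0 -> kf 0 <= kf x).
{ intros x Hx. unfold kf. rewrite hb_0. destruct (Req_EM_T x 0). subst. rewrite hb_0. lra.
  assert (Hle : ln x <= -(4*m)).
  { rewrite <- (ln_exp (-(4*m))). apply ln_le. lra. eapply Rle_trans. apply Hx. apply Rmin_r. }
  assert (Hx0 : 0 < x) by (destruct Hx as [[?|?] _]; [auto| congruence]).
  pose proof (hb_ge x ltac:(lra)). 
  assert (x * ln x <= x * (-(4*m))) by (apply Rmult_le_compat_l; lra). nra. }
destruct (Rle_lt_dec e e0). 
{ eapply Rle_trans. apply Rmin_l. apply Hk0. lra. }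
destruct (Rle_lt_dec 0 (kr' e)).
- eapply Rle_trans. apply Rmin_l. eapply Rle_trans. apply (Hk0 e0). lra.
  unfold kf. rewrite !hb_int by lra. fold (kr e0). fold (kr e).
  destruct (MVT_cor2 kr kr' e0 e r) as [c [E C]].
  { intros c Hc. apply kr_deriv. lra. }
  pose proof (kr'_mono c e ltac:(lra) ltac:(lra) ltac:(lra)). nra.
- eapply Rle_trans. apply Rmin_r. destruct (Req_EM_T e D). rewrite e1. lra.
  unfold kf. rewrite !hb_int by lra. fold (kr e). fold (kr D).
  destruct (MVT_cor2 kr kr' e D ltac:(lra)) as [c [E C]].
  { intros c Hc. apply kr_deriv. lra. }
  pose proof (kr'_mono e c ltac:(lra) ltac:(lra) ltac:(lra)). nra.
Qed.

Lemma kD_gt : hb a < kf D.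
Proof. pose proof D_range. unfold kf.
replace (1 - 2*D - (1-2*a)^2) with 0 by (unfold D; ring).
pose proof (hb_incr a D ltac:(lra) ltac:(lra) ltac:(lra)). lra. Qed.

Lemma k0_gt : hb a < kf 0.
Proof. unfold kf. rewrite hb_0. rewrite (hb_int a) by lra. unfold hr.
unfold m, mu, Ra.
assert (H1 : ln (/ (1-a)) <= / (1-a) - 1) by (apply ln_le_xm1; apply Rinv_0_lt_compat; lra).
rewrite ln_Rinv in H1 by lra.
assert (H2 : ln (a / (1-a)) < a/(1-a) - 1).
{ apply ln_lt_xm1. apply Rdiv_lt_0_compat; lra. intro E.
  assert (Ha2 : a = (a/(1-a))*(1-a)) by (field; lra). rewrite E in Ha2. lra. }
unfold Rdiv in H2. rewrite ln_mult in H2 by (try apply Rinv_0_lt_compat; lra).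
rewrite ln_Rinv in H2 by lra.
remember (ln (1-a) - ln a) as R eqn:HReq.
assert (HR : (1-2*a)/(1-a) < R).
{ replace ((1-2*a)/(1-a)) with (1 - a * /(1-a)) by (field; lra). lra. }
assert (Hl : - ln (1-a) <= a/(1-a)).
{ replace (a/(1-a)) with (/(1-a) - 1) by (field; lra). lra. }
replace (- (a * ln a) - (1 - a) * ln (1 - a)) with (a * R - ln (1-a)) by (rewrite HReq; ring).
replace (2 * (R / (4 * (1 - 2 * a))) * (1 - 2 * 0 - (1 - 2 * a) ^ 2)) with
  (2*a*(1-a)*R/(1-2*a)) by (field; lra).
assert (a*R/(1-2*a) > a/(1-a)).
{ apply Rlt_gt. apply (Rmult_lt_reg_r ((1-2*a)/a)). apply Rdiv_lt_0_compat; lra.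
  replace (a / (1 - a) * ((1 - 2 * a) / a)) with ((1-2*a)/(1-a)) by (field; lra).
  replace (a * R / (1 - 2 * a) * ((1 - 2 * a) / a)) with R by (field; lra). lra. }
replace (2 * a * (1 - a) * R / (1 - 2 * a)) with (a*R + a*R/(1-2*a)) by (field; lra).
lra. Qed.

End G.

Lemma sumN_ext n f g : (forall k, (k < n)%nat -> f k = g k) -> sumN n f = sumN n g.
Proof. induction n; intros H; simpl. reflexivity. rewrite IHn, H. reflexivity. lia. intros; apply H; lia. Qed.

Lemma sumN_plus n f g : sumN n (fun k => f k + g k) = sumN n f + sumN n g.
Proof. induction n; simpl. ring. rewrite IHn. ring. Qed.

Lemma sumN_minus n f g : sumN n (fun k => f k - g k) = sumN n f - sumN n g.
Proof. induction n; simpl. ring. rewrite IHn. ring. Qed.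

Lemma sumN_scal n c f : sumN n (fun k => c * f k) = c * sumN n f.
Proof. induction n; simpl. ring. rewrite IHn. ring. Qed.

Lemma sumN_le n f g : (forall k, (k < n)%nat -> f k <= g k) -> sumN n f <= sumN n g.
Proof. induction n; intros H; simpl. lra. apply Rplus_le_compat. apply IHn. intros; apply H; lia. apply H; lia. Qed.

Lemma sumN_nonneg n f : (forall k, (k < n)%nat -> 0 <= f k) -> 0 <= sumN n f.
Proof. intros H. replace 0 with (sumN n (fun _ => 0)). apply sumN_le. auto.
induction n; simpl. reflexivity. rewrite IHn. ring. intros; apply H; lia. Qed.

Lemma sumN_term n f k : (k < n)%nat -> (forall j, (j < n)%nat -> 0 <= f j) -> f k <= sumN n f.
Proof. induction n; intros Hk H. lia. simpl. destruct (Nat.eq_dec k n).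
- subst. assert (0 <= sumN n f) by (apply sumN_nonneg; intros; apply H; lia). lra.
- assert (f k <= sumN n f) by (apply IHn; [lia | intros; apply H; lia]).
  assert (0 <= f n) by (apply H; lia). lra. Qed.

Lemma plog_split a b c : 0 <= a -> (0 < a -> 0 < b /\ 0 < c) ->
  plog a (b*c) = pl a - a * ln b - a * ln c.
Proof. intros H1 H2. unfold pl, plog. destruct (Req_EM_T a 0).
- subst. ring.
- assert (0 < a) by lra. destruct (H2 H). unfold Rdiv. rewrite Rinv_1, Rmult_1_r.
  rewrite ln_mult, ln_Rinv, ln_mult by (try apply Rinv_0_lt_compat; try apply Rmult_lt_0_compat; lra).
  ring. Qed.

Lemma pl_scale w z : 0 < w -> 0 <= z -> pl (w*z) - w*z*ln w = w * pl z.
Proof. intros Hw Hz. destruct (Req_EM_T z 0).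
- subst. rewrite Rmult_0_r, pl_0. ring.
- rewrite !pl_pos by (try apply Rmult_lt_0_compat; lra). rewrite ln_mult by lra. ring. Qed.

Lemma pl_mul x y : 0 <= x -> 0 <= y -> pl (x*y) = x * pl y + y * pl x.
Proof. intros Hx Hy. destruct (Req_EM_T x 0). subst. rewrite Rmult_0_l, !pl_0. ring.
destruct (Req_EM_T y 0). subst. rewrite Rmult_0_r, !pl_0. ring.
rewrite !pl_pos by (try apply Rmult_lt_0_compat; lra). rewrite ln_mult by lra. ring. Qed.

Section PU.
Variable a : R.
Hypothesis Ha : 0 < a < 1/2.
Variable p : joint.
Hypothesis Hnn : forall x u y, 0 <= p x u y.
Hypothesis Hmk : markov p.

Lemma per_u u :
  sumB (fun x => sumB (fun y => pl (p x u y) - p x u y * ln (pU p u))) >=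
  -2 * hb a * pU p u + 2 * mu a * (pU p u - 2*(p false u true + p true u false) - (1-2*a)^2 * pU p u).
Proof.
pose proof (Hnn false u false). pose proof (Hnn false u true).
pose proof (Hnn true u false). pose proof (Hnn true u true).
assert (Hw : pU p u = p false u false + p false u true + (p true u false + p true u true)).
{ unfold pU, sumB. ring. }
unfold sumB.
destruct (Req_EM_T (pU p u) 0) as [Hw0|Hw0].
- assert (p false u false = 0) by lra. assert (p false u true = 0) by lra.
  assert (p true u false = 0) by lra. assert (p true u true = 0) by lra.
  rewrite Hw0. repeat match goal with H : p _ u _ = 0 |- _ => rewrite H; clear H end.
  rewrite pl_0. lra.
- set (w := pU p u) in *. assert (Hwp : 0 < w) by lra.
  set (A := p true u false + p true u true).
  set (B := p false u true + p true u true).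
  set (al := A / w). set (be := B / w).
  assert (Hal : 0 <= al <= 1).
  { unfold al. split. unfold Rdiv; apply Rmult_le_pos; [unfold A; lra| left; apply Rinv_0_lt_compat; lra].
    apply (Rmult_le_reg_r w). lra. unfold Rdiv. rewrite Rmult_assoc, Rinv_l by lra. unfold A. lra. }
  assert (Hbe : 0 <= be <= 1).
  { unfold be. split. unfold Rdiv; apply Rmult_le_pos; [unfold B; lra| left; apply Rinv_0_lt_compat; lra].
    apply (Rmult_le_reg_r w). lra. unfold Rdiv. rewrite Rmult_assoc, Rinv_l by lra. unfold B. lra. }
  assert (Mk : forall x y, p x u y = pXU p x u * pUY p u y / w).
  { intros x y. pose proof (Hmk x u y). fold w in H3. apply (Rmult_eq_reg_r w); [| lra]. unfold Rdiv. rewrite Rmult_assoc, Rinv_l, Rmult_1_r by lra. exact H3. }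
  assert (E1 : p false u false = w * ((1-al)*(1-be))).
  { rewrite Mk. unfold pXU, pUY, sumB, al, be, A, B. rewrite Hw. field. lra. }
  assert (E2 : p false u true = w * ((1-al)*be)).
  { rewrite Mk. unfold pXU, pUY, sumB, al, be, A, B. rewrite Hw. field. lra. }
  assert (E3 : p true u false = w * (al*(1-be))).
  { rewrite Mk. unfold pXU, pUY, sumB, al, be, A, B. rewrite Hw. field. lra. }
  assert (E4 : p true u true = w * (al*be)).
  { rewrite Mk. unfold pXU, pUY, sumB, al, be, A, B. rewrite Hw. field. lra. }
  rewrite E1, E2, E3, E4.
  rewrite !pl_scale by (try apply Rmult_le_pos; lra).
  rewrite !pl_mul by lra.
  pose proof (K2 a Ha al be Hal Hbe).
  assert (hb al = - pl al - pl (1-al)) by reflexivity.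
  assert (hb be = - pl be - pl (1-be)) by reflexivity.
  apply Rle_ge.
  assert (w * (pl al + pl (1-al) + pl be + pl (1-be)) >=
          w * (- 2 * hb a + 2 * mu a * ((1 - 2 * al) * (1 - 2 * be) - (1 - 2 * a) ^ 2))).
  { apply Rle_ge, Rmult_le_compat_l; lra. }
  replace (w * ((1 - al) * be) + w * (al * (1 - be))) with (w * (al + be - 2*al*be)) by ring.
  nra.
Qed.
End PU.

Lemma mul_ln_pl x : 0 <= x -> x * ln x = pl x.
Proof. intros H. destruct (Req_EM_T x 0). subst. rewrite pl_0. ring. rewrite pl_pos; lra. Qed.

Lemma pU_ge p x u y : (forall x u y, 0 <= p x u y) -> p x u y <= pU p u.
Proof. intros H. pose proof (H false u false). pose proof (H false u true).
pose proof (H true u false). pose proof (H true u true).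
unfold pU, sumB. destruct x, y; lra. Qed.

Lemma row n p q x y : (forall x u y, 0 <= p x u y) -> pXY n p x y = q x y ->
  sumN n (fun u => plog (p x u y) (pXY n p x y * pU p u)) =
  sumN n (fun u => pl (p x u y) - p x u y * ln (pU p u)) - pl (q x y).
Proof. intros Hnn Hq.
rewrite (sumN_ext n _ (fun u => (pl (p x u y) - p x u y * ln (pU p u)) - ln (pXY n p x y) * p x u y)).
- rewrite sumN_minus, sumN_scal. fold (pXY n p x y). rewrite Hq.
  rewrite Rmult_comm, mul_ln_pl. reflexivity. rewrite <- Hq. unfold pXY. apply sumN_nonneg. auto.
- intros k Hk. rewrite plog_split. ring. auto. intros Hp. split.
  + eapply Rlt_le_trans. apply Hp. unfold pXY. apply (sumN_term n (fun u => p x u y)). auto. auto.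
  + eapply Rlt_le_trans. apply Hp. apply pU_ge. auto.
Qed.

Lemma sumU_1 n p : valid n p -> sumN n (fun u => pU p u) = 1.
Proof. intros [_ [_ H]]. rewrite <- H. unfold pU, sumB. rewrite !sumN_plus. ring. Qed.

Lemma wyner_lb a q n p : 0 < a < 1/2 -> coupling q -> valid n p -> markov p ->
  (forall x y, pXY n p x y = q x y) ->
  ln 2 - 2*hb a + kf a (q false true + q true false) <= MI_XY_U n p.
Proof. intros Ha Hc Hv Hm Hq.
assert (Hnn : forall x u y, 0 <= p x u y) by apply Hv.
unfold MI_XY_U. unfold sumB. cbv beta. rewrite !(row n p q) by auto.
set (G := fun x u y => pl (p x u y) - p x u y * ln (pU p u)).
assert (E : sumN n (fun u => G false u false) - pl (q false false) +
   (sumN n (fun u => G false u true) - pl (q false true)) +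
   (sumN n (fun u => G true u false) - pl (q true false) +
    (sumN n (fun u => G true u true) - pl (q true true))) =
   sumN n (fun u => sumB (fun x => sumB (fun y => G x u y))) -
   (pl (q false false) + pl (q false true) + pl (q true false) + pl (q true true))).
{ unfold sumB. rewrite !sumN_plus. ring. }
unfold G in E. rewrite E. clear E G.
assert (L : sumN n (fun u => -2 * hb a * pU p u + 2 * mu a * (pU p u - 2*(p false u true + p true u false) - (1-2*a)^2 * pU p u)) <=
  sumN n (fun u => sumB (fun x => sumB (fun y => pl (p x u y) - p x u y * ln (pU p u))))).
{ apply sumN_le. intros k _. apply Rge_le. apply per_u; auto. }
assert (Lv : sumN n (fun u => -2 * hb a * pU p u + 2 * mu a * (pU p u - 2*(p false u true + p true u false) - (1-2*a)^2 * pU p u)) =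
  -2 * hb a * 1 + 2 * mu a * (1 - 2 * (q false true + q true false) - (1-2*a)^2 * 1)).
{ rewrite sumN_plus, !sumN_scal, !sumN_minus, !sumN_scal, sumN_plus, sumU_1 by auto.
  rewrite <- !Hq. unfold pXY. ring. }
destruct Hc as [Hq0 [Hr Hcl]].
pose proof (Hr false) as R0. pose proof (Hr true) as R1. pose proof (Hcl false) as C0. pose proof (Hcl true) as C1.
unfold sumB in R0, R1, C0, C1.
set (e := q false true + q true false) in *.
assert (Q1 : q false true = e/2) by (unfold e; lra).
assert (Q2 : q true false = e/2) by (unfold e; lra).
assert (Q3 : q false false = (1-e)/2) by (unfold e; lra).
assert (Q4 : q true true = (1-e)/2) by (unfold e; lra).
assert (He : 0 <= e <= 1) by (pose proof (Hq0 false true); pose proof (Hq0 true false); pose proof (Hq0 false false); pose proof (Hq0 true true); unfold e; lra).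
assert (Hent : - (pl (q false false) + pl (q false true) + pl (q true false) + pl (q true true)) = ln 2 + hb e).
{ rewrite Q1, Q2, Q3, Q4. unfold hb.
  destruct (Req_EM_T e 0) as [Z|Z].
  - rewrite Z. replace (0/2) with 0 by field. replace ((1-0)/2) with (/2) by field.
    replace (1-0) with 1 by ring. rewrite pl_0, !pl_pos by lra. rewrite ln_1, ln_Rinv by lra. field.
  - destruct (Req_EM_T e 1) as [O|O].
    + rewrite O. replace ((1-1)/2) with 0 by field. replace (1-1) with 0 by ring.
      rewrite pl_0, !pl_pos by lra. unfold Rdiv. rewrite Rmult_1_l, ln_1, ln_Rinv by lra. field.
    + assert (0 < e < 1) by lra.
      rewrite !pl_pos by lra. unfold Rdiv. rewrite !ln_mult, !ln_Rinv by lra. field. }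
unfold kf. lra.
Qed.

Definition f0 (a:R) (x:bool) := if x then a else 1-a.
Definition f1 (a:R) (x:bool) := if x then 1-a else a.
Definition sch (a:R) : joint := fun x u y =>
  match u with O => /2 * f0 a x * f0 a y | 1%nat => /2 * f1 a x * f1 a y | _ => 0 end.

Section S.
Variable a : R.
Hypothesis Ha : 0 < a < 1/2.

Lemma sch_nn x u y : 0 <= sch a x u y.
Proof. destruct u as [|[|u]]; destruct x, y; simpl; unfold f0, f1; try lra;
 repeat apply Rmult_le_pos; lra. Qed.

Lemma pXU_0 x : pXU (sch a) x 0 = /2 * f0 a x.
Proof. unfold pXU, sumB, sch. destruct x; unfold f0; field. Qed.
Lemma pXU_1 x : pXU (sch a) x 1 = /2 * f1 a x.
Proof. unfold pXU, sumB, sch. destruct x; unfold f1; field. Qed.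
Lemma pXU_2 x u : pXU (sch a) x (S (S u)) = 0.
Proof. unfold pXU, sumB, sch. ring. Qed.
Lemma pUY_0 y : pUY (sch a) 0 y = /2 * f0 a y.
Proof. unfold pUY, sumB, sch. destruct y; unfold f0; field. Qed.
Lemma pUY_1 y : pUY (sch a) 1 y = /2 * f1 a y.
Proof. unfold pUY, sumB, sch. destruct y; unfold f1; field. Qed.
Lemma pUY_2 y u : pUY (sch a) (S (S u)) y = 0.
Proof. unfold pUY, sumB, sch. ring. Qed.
Lemma pU_01 u : (u < 2)%nat -> pU (sch a) u = /2.
Proof. intros H. destruct u as [|[|u]]; [| |lia]; unfold pU, sumB, sch, f0, f1; field. Qed.
Lemma pX_sch x : pX 5 (sch a) x = /2.
Proof. unfold pX. cbn [sumN]. fold (pXU (sch a) x 0). fold (pXU (sch a) x 1).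
 fold (pXU (sch a) x 2). fold (pXU (sch a) x 3). fold (pXU (sch a) x 4).
 rewrite pXU_0, pXU_1, !pXU_2. destruct x; unfold f0, f1; field. Qed.
Lemma pY_sch y : pY 5 (sch a) y = /2.
Proof. unfold pY. cbn [sumN]. fold (pUY (sch a) 0 y). fold (pUY (sch a) 1 y).
 fold (pUY (sch a) 2 y). fold (pUY (sch a) 3 y). fold (pUY (sch a) 4 y).
 rewrite pUY_0, pUY_1, !pUY_2. destruct y; unfold f0, f1; field. Qed.

Lemma sch_valid : valid 5 (sch a).
Proof. split; [|split].
- apply sch_nn.
- intros x u y Hu. destruct u as [|[|u]]; [lia|lia|reflexivity].
- change (pX 5 (sch a) false + pX 5 (sch a) true = 1). rewrite !pX_sch. field. Qed.

Lemma sch_markov : markov (sch a).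
Proof. intros x u y. destruct u as [|[|u]].
- rewrite pXU_0, pUY_0, pU_01 by lia. unfold sch. field.
- rewrite pXU_1, pUY_1, pU_01 by lia. unfold sch. field.
- rewrite pXU_2, pUY_2. unfold sch. ring. Qed.

Lemma pXY_sch x y : pXY 5 (sch a) x y = if Bool.eqb x y then /2 * (1 - 2*a*(1-a)) else a*(1-a).
Proof. unfold pXY. cbn [sumN]. unfold sch. destruct x, y; simpl; unfold f0, f1; field. Qed.

Lemma sch_dist : distortion 5 (sch a) = 2*a*(1-a).
Proof. unfold distortion. rewrite !pXY_sch. simpl. ring. Qed.

Lemma plog_pos x y : 0 < x -> plog x y = x * ln (x/y).
Proof. intros H. unfold plog. destruct (Req_EM_T x 0); [lra|reflexivity]. Qed.
Lemma plog_0 y : plog 0 y = 0.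
Proof. unfold plog. destruct (Req_EM_T 0 0); [reflexivity|lra]. Qed.

Lemma sch_MI_XU : MI_XU 5 (sch a) = ln 2 - hb a.
Proof. unfold MI_XU, sumB. cbn [sumN]. rewrite !pX_sch, !pXU_0, !pXU_1, !pXU_2, !pU_01 by lia.
 rewrite !plog_0. unfold sumB, f0, f1.
 rewrite !plog_pos by lra.
 replace (/2 * a / (/2 * /2)) with (2*a) by field.
 replace (/2 * (1-a) / (/2 * /2)) with (2*(1-a)) by field.
 rewrite !ln_mult by lra. unfold hb. rewrite !pl_pos by lra. field. Qed.

Lemma sch_MI_YU : MI_YU 5 (sch a) = ln 2 - hb a.
Proof. unfold MI_YU, sumB. cbn [sumN]. rewrite !pY_sch, !pUY_0, !pUY_1, !pUY_2, !pU_01 by lia.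
 rewrite !plog_0. unfold sumB, f0, f1.
 rewrite !plog_pos by lra.
 replace (/2 * a / (/2 * /2)) with (2*a) by field.
 replace (/2 * (1-a) / (/2 * /2)) with (2*(1-a)) by field.
 rewrite !ln_mult by lra. unfold hb. rewrite !pl_pos by lra. field. Qed.
End S.

Lemma inf_exists (S : R -> Prop) : (exists r, S r) -> (exists m, forall r, S r -> m <= r) ->
  exists m, is_inf S m.
Proof. intros [r0 Hr0] [m Hm].
destruct (completeness (fun y => S (-y))) as [l [Hl1 Hl2]].
- exists (-m). intros y Hy. pose proof (Hm _ Hy). lra.
- exists (-r0). replace (- - r0) with r0 by ring. auto.
- exists (-l). split.
  + intros r Hr. assert (-r <= l). apply Hl1. replace (- - r) with r by ring. auto. lra.
  + intros m' Hm'. assert (l <= -m'). apply Hl2. intros y Hy. pose proof (Hm' _ Hy). lra. lra.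
Qed.

Lemma plog_ge a b : 0 <= a -> 0 <= b -> (0 < a -> 0 < b) -> a - b <= plog a b.
Proof. intros Ha Hb H. destruct (Req_EM_T a 0).
- subst. rewrite plog_0. lra.
- assert (0 < a) by lra. specialize (H H0). rewrite plog_pos by lra.
  assert (ln (b/a) <= b/a - 1) by (apply ln_le_xm1; apply Rdiv_lt_0_compat; lra).
  replace (a/b) with (/ (b/a)) by (field; lra). rewrite ln_Rinv by (apply Rdiv_lt_0_compat; lra).
  assert (a * (b/a) = b) by (field; lra). nra. Qed.

Lemma I0_nonneg D r : I0_set D r -> 0 <= r.
Proof. intros [p [Hv [Hm [HX [HY [Hd Hr]]]]]]. subst r.
eapply Rle_trans; [| apply Rmax_l].
assert (Hnn : forall x u y, 0 <= p x u y) by apply Hv.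
assert (E : 0 = sumB (fun x => sumN 5 (fun u => pXU p x u - pX 5 p x * pU p u))).
{ unfold sumB. rewrite !sumN_minus, !sumN_scal, sumU_1 by auto.
  change (0 = pX 5 p false - pX 5 p false * 1 + (pX 5 p true - pX 5 p true * 1)). ring. }
rewrite E. unfold MI_XU, sumB. apply Rplus_le_compat; apply sumN_le; intros k _;
 apply plog_ge; unfold pXU, sumB; try (rewrite HX; unfold pU, sumB; pose proof (Hnn false k false);
 pose proof (Hnn false k true); pose proof (Hnn true k false); pose proof (Hnn true k true); intros; nra).
 all: pose proof (Hnn false k false);
 pose proof (Hnn false k true); pose proof (Hnn true k false); pose proof (Hnn true k true); lra.
Qed.

Theorem mainTheorem7 : forall D : R, 0 < D < 1/2 ->
  exists a b : R, is_inf (I0_set D) a /\ is_inf (C0_set D) b /\ a < b.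
Proof.
intros D HD.
set (s := sqrt (1 - 2*D)).
assert (Hs2 : s * s = 1 - 2*D) by (apply sqrt_sqrt; lra).
assert (Hs0 : 0 < s) by (apply sqrt_lt_R0; lra).
assert (Hs1 : s < 1) by nra.
set (a := (1 - s)/2).
assert (Ha : 0 < a < 1/2) by (unfold a; lra).
assert (HDa : 2*a*(1-a) = D) by (unfold a; nra).
set (Lb := ln 2 - 2*hb a + Rmin (kf a 0) (kf a (2*a*(1-a)))).
assert (Hgap : ln 2 - hb a < Lb).
{ unfold Lb. assert (hb a < Rmin (kf a 0) (kf a (2*a*(1-a)))).
  { apply Rmin_glb_lt. apply k0_gt; auto. apply kD_gt; auto. } lra. }
assert (HWl : forall q e, coupling q -> e = q false true + q true false -> e <= D ->
   forall r, Wyner_set q r -> Lb <= r).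
{ intros q e Hc He HeD r [n [p [Hv [Hm [Hq Hr]]]]]. subst r.
  pose proof (wyner_lb a q n p Ha Hc Hv Hm Hq).
  assert (0 <= e). { destruct Hc as [Hq0 _]. pose proof (Hq0 false true). pose proof (Hq0 true false). lra. }
  pose proof (k_bound a Ha e ltac:(lra)). unfold Lb. rewrite He in H1. lra. }
destruct (inf_exists (I0_set D)) as [A HA].
{ exists (ln 2 - hb a). exists (sch a). split. apply sch_valid; auto. split. apply sch_markov; auto.
  split. intros; rewrite pX_sch; auto; lra. split. intros; rewrite pY_sch; auto; lra.
  split. rewrite sch_dist by auto. lra. rewrite sch_MI_XU, sch_MI_YU by auto. unfold Rmax.
  destruct (Rle_dec _ _); reflexivity. }
{ exists 0. apply I0_nonneg. }
set (q0 := pXY 5 (sch a)).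
assert (Hq0c : coupling q0).
{ split; [|split]; intros; unfold q0; try unfold sumB; rewrite ?pXY_sch by auto.
  - destruct x, y; simpl; nra.
  - destruct x; simpl; field_simplify; nra.
  - destruct y; simpl; field_simplify; nra. }
assert (Hq0e : q0 false true + q0 true false = D).
{ unfold q0. rewrite !pXY_sch by auto. simpl. lra. }
destruct (inf_exists (Wyner_set q0)) as [c0 Hc0].
{ exists (MI_XY_U 5 (sch a)). exists 5%nat, (sch a). split. apply sch_valid; auto.
  split. apply sch_markov; auto. split; [intros; reflexivity | reflexivity]. }
{ exists Lb. apply (HWl q0 D Hq0c). auto. lra. }
destruct (inf_exists (C0_set D)) as [B HB].
{ exists c0. exists q0. split; auto. split; [lra | auto]. }
{ exists Lb. intros c [q [Hc [He Hi]]]. destruct Hi as [_ Hi]. apply Hi.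
  apply (HWl q (q false true + q true false)); auto. }
exists A, B. split; auto. split; auto.
assert (A <= ln 2 - hb a).
{ destruct HA as [HA _]. apply HA. exists (sch a). split. apply sch_valid; auto. split. apply sch_markov; auto.
  split. intros; rewrite pX_sch; auto; lra. split. intros; rewrite pY_sch; auto; lra.
  split. rewrite sch_dist by auto. lra. rewrite sch_MI_XU, sch_MI_YU by auto. unfold Rmax.
  destruct (Rle_dec _ _); reflexivity. }
assert (Lb <= B).
{ destruct HB as [_ HB]. apply HB. intros c [q [Hc [He Hi]]]. destruct Hi as [_ Hi]. apply Hi.
  apply (HWl q (q false true + q true false)); auto. }
lra.
Qed.
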